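(* Let $\mathcal{F}:\mathcal{T}^Y\to\mathcal{T}^Z$ be a cover between trees of spheres, let $T''$ be a nonempty, open and connected subset of $T^Z$, and let $T'$ be a connected component of $F^{-1}(T'')$. Then the map $\overline{\mathcal{F}}:\overline{T'}\to\overline{T''}$ defined by $\overline{F}:=F|_{\overline{T'}}:\overline{T'}\to\overline{T''}$ and $\overline{f}_v:=f_v$ for every internal vertex $v$ of $\overline{T'}$ is a cover between trees of spheres, where $\overline{T'}$ (resp. $\overline{T''}$) is regarded as a tree of spheres marked by its set of leaves, with the spheres $\mathcal{S}_v$ and attaching maps $i_v$ of $\mathcal{T}^Y$ (resp. $\mathcal{T}^Z$) at its internal vertices.
   Context: Trees are finite connected graphs without cycles (vertex set $V$, edges $2$-element subsets of $V$, $E_v$ the set of edges containing $v$), regarded as the set $V\sqcup E$ with the topology whose closed sets are the sub-graphs (subsets containing both endpoints of each of their edges); $\overline{A}$ denotes closure. Leaves are vertices of valence $1$, the others internal vertices ($IV$). For $T''$ and $T'$ as in the claim, $\overline{T'}$ is a sub-tree of $T^Y$ whose internal vertices are exactly the internal vertices of $T^Y$ lying in $T'$, each having the same set of incident edges as in $T^Y$ (similarly for $\overline{T''}$ in $T^Z$), so the attaching maps $i_v$ make sense. A tree of spheres $\mathcal{T}^X$ marked by a finite set $X$ ($\ge3$ elements) consists of a tree $T^X$ whose leaf set is $X$ and, for each internal vertex $v$, a topological $2$-sphere $\mathcal{S}_v$ and an injection $i_v:E_v\to\mathcal{S}_v$; $X_v:=i_v(E_v)$. A cover $\mathcal{F}:\mathcal{T}^Y\to\mathcal{T}^Z$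 consists of a map $F:T^Y\to T^Z$ sending vertices to vertices and each edge $\{v,w\}$ to the edge $\{F(v),F(w)\}$, with $F(Y)\subseteq Z$, $F(IV^Y)\subseteq IV^Z$ (leaves to leaves, internal vertices to internal vertices), and for each $v\in IV^Y$, $w=F(v)$, a topological branched covering $f_v:\mathcal{S}_v\to\mathcal{S}_w$ such that $f_v:\mathcal{S}_v\setminus Y_v\to\mathcal{S}_w\setminus Z_w$ is a covering map, $f_v\circ i_v=i_w\circ F$ on $E_v$, and for an edge $e=\{v_1,v_2\}$ between internal vertices $\deg_{i_{v_1}(e)}f_{v_1}=\deg_{i_{v_2}(e)}f_{v_2}$.
   Formalization: In the conclusion, $\overline{T'}$ and $\overline{T''}$ are trees of spheres marked by their leaf sets without the requirement that these sets have at least 3 elements. The statement above fails without it. *)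

(* Defs.v *)
From mathcomp Require Import all_boot all_algebra.
From mathcomp Require Import all_classical all_reals topology.
From mathcomp Require Import Rstruct Rstruct_topology.
Set Implicit Arguments. Unset Strict Implicit. Unset Printing Implicit Defensive.
Import GRing.Theory Num.Theory.

Record graph (V : finType) := Graph { gV : {set V}; gE : {set {set V}} }.

Section Graphs.
Variable V : finType.
Implicit Types (G : graph V).

Definition is_graph G : Prop :=
  forall e, e \in gE G -> #|e| = 2 /\ e \subset gV G.

Definition edge2 (x y : V) : {set V} := [set x; y].

Definition adj G : rel V := fun x y => edge2 x y \in gE G.

Definition edges_at G (v : V) : {set {set V}} := [set e in gE G | v \in e].

Definition valence G (v : V) : nat := #|edges_at G v|.

Definition leaves G : {set V} := [set v in gV G | valence G v == 1%N].
Definition internal G : {set V} := [set v in gV G | valence G v != 1%N].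

Definition graph_connected G : Prop :=
  (exists v, v \in gV G) /\
  forall u v, u \in gV G -> v \in gV G -> connect (adj G) u v.

Definition acyclic G : Prop :=
  forall s : seq V, uniq s -> (3 <= size s)%N -> ~~ cycle (adj G) s.

Definition is_tree G : Prop := is_graph G /\ graph_connected G /\ acyclic G.

Definition pt := (V + {set V})%type.

Definition pts G : {set pt} :=
  [set x : pt | match x with inl v => v \in gV G | inr e => e \in gE G end].

(** closed sets are the sub-graphs *)
Definition closed_in G (A : {set pt}) : Prop :=
  A \subset pts G /\ forall e v, inr e \in A -> v \in e -> inl v \in A.

Definition open_in G (A : {set pt}) : Prop :=
  A \subset pts G /\ closed_in G (pts G :\: A).

Definition closure_in G (A : {set pt}) : {set pt} :=
  \bigcap_(C : {set pt} | `[< closed_in G C >] && (A \subset C)) C.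

Definition connected_in G (A : {set pt}) : Prop :=
  A \subset pts G /\
  forall O1 O2, open_in G O1 -> open_in G O2 ->
    A \subset O1 :|: O2 -> A :&: O1 :&: O2 = finset.set0 ->
    A :&: O1 = finset.set0 \/ A :&: O2 = finset.set0.

Definition component_of G (B C : {set pt}) : Prop :=
  [/\ C \subset B, C != finset.set0, connected_in G C &
      forall D : {set pt}, C \subset D -> D \subset B -> connected_in G D -> D = C].

Definition graph_of (C : {set pt}) : graph V :=
  Graph [set v | inl v \in C] [set e | inr e \in C].

End Graphs.

Definition map_pt (VY VZ : finType) (F : VY -> VZ) (x : pt VY) : pt VZ :=
  match x with inl v => inl (F v) | inr e => inr (F @: e) end.

Definition preim_pt (VY VZ : finType) (GY : graph VY) (F : VY -> VZ)
    (B : {set pt VZ}) : {set pt VY} :=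
  [set x in pts GY | map_pt F x \in B].

Local Open Scope classical_set_scope.
Local Open Scope ring_scope.

Notation RR := Rdefinitions.R.

Definition homeo_on (X Y : topologicalType) (A : set X) (B : set Y)
    (f : X -> Y) (g : Y -> X) : Prop :=
  [/\ {within A, continuous f}, {within B, continuous g},
      (forall x, A x -> B (f x)) /\ (forall y, B y -> A (g y)),
      (forall x, A x -> g (f x) = x) & (forall y, B y -> f (g y) = y)].

Definition sphere2 : set (RR * RR * RR) :=
  [set p | p.1.1 ^+ 2 + p.1.2 ^+ 2 + p.2 ^+ 2 = 1].

Definition is_2sphere (X : topologicalType) : Prop :=
  exists (f : X -> RR * RR * RR) (g : RR * RR * RR -> X),
    homeo_on setT sphere2 f g.

Definition disk : set (RR * RR) := [set p | p.1 ^+ 2 + p.2 ^+ 2 < 1].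

(** z |-> z^d on C = R^2 *)
Definition cpow (d : nat) (z : RR * RR) : RR * RR :=
  iter d (fun w : RR * RR => (w.1 * z.1 - w.2 * z.2, w.1 * z.2 + w.2 * z.1))
    (1, 0).

Definition local_model (X Y : topologicalType) (f : X -> Y) (x : X) (d : nat)
  : Prop :=
  exists (U : set X) (W : set Y) (phi : X -> RR * RR) (phi' : RR * RR -> X)
         (psi : Y -> RR * RR) (psi' : RR * RR -> Y),
    [/\ open U /\ open W, U x /\ (forall z, U z -> W (f z)),
        homeo_on U disk phi phi' /\ homeo_on W disk psi psi',
        phi x = (0, 0) /\ psi (f x) = (0, 0) &
        forall z, U z -> psi (f z) = cpow d (phi z)].

Definition branched_covering (X Y : topologicalType) (f : X -> Y) : Prop :=
  continuous f /\ forall x, exists d, (0 < d)%N /\ local_model f x d.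

Definition local_degree (X Y : topologicalType) (f : X -> Y) (x : X) : nat :=
  xget 0%N [set d | (0 < d)%N /\ local_model f x d].

Definition covering_map_on (X Y : topologicalType) (A : set X) (B : set Y)
    (f : X -> Y) : Prop :=
  (forall x, A x -> B (f x)) /\
  forall y, B y -> exists W : set Y,
    [/\ open W, W y &
      exists sheets : set (set X),
        [/\ (forall U, sheets U -> exists O : set X, open O /\ U = A `&` O),
            (forall U U', sheets U -> sheets U' -> U `&` U' !=set0 -> U = U'),
            A `&` (f @^-1` (B `&` W)) = \bigcup_(U in sheets) U &
            forall U, sheets U -> exists g, homeo_on U (B `&` W) f g]].

(** A tree of spheres on the graph [G]: [G] is a tree (marked by its set of
    leaves), and every internal vertex [v] carries a 2-sphere [S v] and an
    injection [i v : E_v -> S v].  [marked_tree_of_spheres] omits the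
    requirement of at least 3 marked points. *)
Definition marked_tree_of_spheres (V : finType) (G : graph V)
    (S : V -> topologicalType) (i : forall v, {set V} -> S v) : Prop :=
  is_tree G /\
  forall v, v \in internal G ->
    is_2sphere (S v) /\ {in edges_at G v &, injective (i v)}.
Arguments marked_tree_of_spheres {V} G S i.

Definition tree_of_spheres (V : finType) (G : graph V)
    (S : V -> topologicalType) (i : forall v, {set V} -> S v) : Prop :=
  marked_tree_of_spheres G S i /\ (3 <= #|leaves G|)%N.
Arguments tree_of_spheres {V} G S i.

Definition marks (V : finType) (G : graph V) (S : V -> topologicalType)
    (i : forall v, {set V} -> S v) (v : V) : set (S v) :=
  [set i v e | e in [set e | e \in edges_at G v]].
Arguments marks {V} G {S} i v.

Definition is_cover (VY VZ : finType)
    (GY : graph VY) (SY : VY -> topologicalType) (iY : forall v, {set VY} -> SY v)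
    (GZ : graph VZ) (SZ : VZ -> topologicalType) (iZ : forall w, {set VZ} -> SZ w)
    (F : VY -> VZ) (f : forall v, SY v -> SZ (F v)) : Prop :=
  [/\ (forall v, v \in gV GY -> F v \in gV GZ) /\
        (forall e, e \in gE GY -> F @: e \in gE GZ),
      (forall v, v \in leaves GY -> F v \in leaves GZ),
      (forall v, v \in internal GY -> F v \in internal GZ),
      (forall v, v \in internal GY ->
         [/\ branched_covering (f v),
             covering_map_on (~` marks GY iY v) (~` marks GZ iZ (F v)) (f v) &
             forall e, e \in edges_at GY v -> f v (iY v e) = iZ (F v) (F @: e)]) &
      (forall v1 v2, v1 \in internal GY -> v2 \in internal GY ->
         edge2 v1 v2 \in gE GY ->
         local_degree (f v1) (iY v1 (edge2 v1 v2)) =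
         local_degree (f v2) (iY v2 (edge2 v1 v2)))].
Arguments is_cover {VY VZ} GY SY iY GZ SZ iZ F f.

(* Main.v *)
Require Import Defs.
From mathcomp Require Import all_boot all_algebra.
From mathcomp Require Import all_classical all_reals topology.
Set Implicit Arguments. Unset Strict Implicit. Unset Printing Implicit Defensive.
Local Notation inE := finset.inE (only parsing).
Local Notation setUC := finset.setUC (only parsing).
Local Notation setIC := finset.setIC (only parsing).
Local Notation in_setU := finset.in_setU (only parsing).
Local Notation in_setI := finset.in_setI (only parsing).
Local Notation in_setD := finset.in_setD (only parsing).
Local Notation in_set1 := finset.in_set1 (only parsing).
Local Notation subsetUl := finset.subsetUl (only parsing).
Local Notation subsetDl := finset.subsetDl (only parsing).
Local Notation subsetP := fintype.subsetP (only parsing).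
Local Notation setP := finset.setP (only parsing).

Section Aux.
Variable V : finType.
Implicit Types (G : graph V) (A : {set pt V}).

Lemma open_star G A v e : open_in G A -> inl v \in A -> e \in gE G -> v \in e ->
  inr e \in A.
Proof.
case=> sA [_ cl] vA eE ve; apply/negPn/negP => eA.
have : inl v \in pts G :\: A by apply: (cl e v) => //; rewrite !inE eA eE.
by rewrite inE vA.
Qed.

Lemma open_intro G A : is_graph G -> A \subset pts G ->
  (forall v e, inl v \in A -> e \in gE G -> v \in e -> inr e \in A) -> open_in G A.
Proof.
move=> gG sA st; split=> //; split; first exact: subsetDl.
move=> e v. rewrite /pts !inE => /andP[eA eE] ve.
have eE' := eE.
apply/andP; split; last by have [_ /subsetP] := gG e eE'; apply.
by apply/negP => vA; move: (st v e vA eE' ve); rewrite (negbTE eA).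
Qed.

Definition cl A : {set pt V} := A :|: [set x : pt V |
  match x with inl v => [exists e, (inr e \in A) && (v \in e)] | inr _ => false end].

Lemma closure_eq G A : is_graph G -> A \subset pts G -> closure_in G A = cl A.
Proof.
move=> gG sA; apply/setP => x; apply/bigcapP/idP.
- move=> H; apply: H; apply/andP; split; last exact: subsetUl.
  apply/asboolP; split.
  + apply/subsetP => y; rewrite in_setU; case/orP; first by move/(subsetP sA).
    rewrite inE; case: y => // v /existsP[e /andP[eA ve]].
    have := subsetP sA _ eA; rewrite inE => eE.
    by rewrite inE; have [_ /subsetP] := gG e eE; apply.
  + move=> e v; rewrite !inE => /orP[eA|//] ve; apply/orP; right.
    by apply/existsP; exists e; rewrite eA.
- rewrite !inE => H C /andP[/asboolP [sC clC] sAC]; case/orP: H.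
  + by move/(subsetP sAC).
  + case: x => // v /existsP[e /andP[eA ve]]; apply: (clC e) => //.
    exact: (subsetP sAC).
Qed.

Lemma closure_inr G A e : is_graph G -> A \subset pts G ->
  (inr e \in closure_in G A) = (inr e \in A).
Proof. by move=> gG sA; rewrite closure_eq // !inE orbF. Qed.

Lemma closure_inl G A v : is_graph G -> A \subset pts G ->
  (inl v \in closure_in G A) = (inl v \in A) || [exists e, (inr e \in A) && (v \in e)].
Proof. by move=> gG sA; rewrite closure_eq // !inE. Qed.

Lemma sub_closure G A : is_graph G -> A \subset pts G -> A \subset closure_in G A.
Proof. by move=> gG sA; rewrite closure_eq //; apply: subsetUl. Qed.

Lemma two_elt (e : {set V}) : #|e| = 2 -> exists x y, [/\ x != y, x \in e, y \in e &
   e = [set x; y]].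
Proof.
move/eqP/cards2P=> [x [y [xy ->]]]; exists x, y; split=> //; rewrite !inE eqxx //.
by rewrite orbT.
Qed.

Lemma two_elt_eq (e : {set V}) x y : #|e| = 2 -> x != y -> x \in e -> y \in e ->
  e = edge2 x y.
Proof.
move=> c2 xy xe ye; apply/esym/eqP; rewrite eqEcard c2.
have -> : #|edge2 x y| = 2 by rewrite /edge2 cards2 xy.
rewrite leqnn andbT; apply/subsetP => z; rewrite !inE.
by case/orP => /eqP ->.
Qed.

Lemma edge2C (x y : V) : edge2 x y = edge2 y x.
Proof. by rewrite /edge2 setUC. Qed.

Definition O_of G (P : pred V) : {set pt V} := [set p : pt V |
  match p with inl x => (x \in gV G) && P x
             | inr e => (e \in gE G) && [exists x in e, P x] end].

Lemma O_open G P : is_graph G -> open_in G (O_of G P).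
Proof.
move=> gG; apply: open_intro => //.
  apply/subsetP => p; rewrite !inE; case: p => [v|e] /andP[] //.
move=> v e; rewrite !inE => /andP[_ Pv] eE ve; rewrite eE /=.
by apply/existsP; exists v; rewrite ve.
Qed.

Lemma O_cover G A (P Q : pred V) : A \subset pts G ->
  (forall x, inl x \in A -> P x || Q x) ->
  (forall e, inr e \in A -> exists x, (x \in e) && (P x || Q x)) ->
  A \subset O_of G P :|: O_of G Q.
Proof.
move=> sA hv he; apply/subsetP => p pA; have := subsetP sA _ pA.
rewrite !inE; case: p pA => [v|e] pA pP.
  by rewrite pP /=; apply: hv.
rewrite pP /=; have [x /andP[xe]] := he e pA; case/orP => Px.
  by apply/orP; left; apply/existsP; exists x; rewrite xe.
by apply/orP; right; apply/existsP; exists x; rewrite xe.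
Qed.

Lemma O_wit G A (P : pred V) x : is_graph G -> A \subset pts G ->
  inl x \in closure_in G A -> P x -> A :&: O_of G P != finset.set0.
Proof.
move=> gG sA; rewrite closure_inl //; case/orP => [xA|/existsP[e /andP[eA xe]]] Px;
  apply/set0Pn.
  exists (inl x); rewrite !inE xA Px andbT /=.
  by have := subsetP sA _ xA; rewrite inE.
exists (inr e); rewrite !inE eA /=.
have := subsetP sA _ eA; rewrite inE => -> /=.
by apply/existsP; exists x; rewrite xe.
Qed.


Lemma conn_graph G A : is_graph G -> connected_in G A -> A != finset.set0 ->
  graph_connected (graph_of (closure_in G A)).
Proof.
move=> gG [sA cA] A0; split.
  have [p pA] := set0Pn _ A0; have := subsetP sA _ pA; rewrite inE.
  case: p pA => [v|e] pA pP.
    exists v; rewrite inE; exact: (subsetP (sub_closure gG sA)).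
  have [x [y [_ xe _ _]]] := two_elt (proj1 (gG e pP)).
  exists x; rewrite inE closure_inl //; apply/orP; right.
  by apply/existsP; exists e; rewrite pA.
move=> u v; rewrite !inE => uC vC.
set R := connect (adj (graph_of (closure_in G A))) u.
have := cA (O_of G R) (O_of G (predC R)) (O_open _ gG) (O_open _ gG).
case.
- apply: O_cover => //; first by move=> x _ /=; rewrite orbN.
  move=> e eA; have := subsetP sA _ eA; rewrite inE => eE.
  have [x [y [_ xe _ _]]] := two_elt (proj1 (gG e eE)).
  by exists x; rewrite xe /= orbN.
- apply/setP => p; rewrite !inE; apply/negP.
  case: p => [x|e]; first by rewrite /=; case: (R x); rewrite ?andbF ?andbT.
  case/andP=> /andP[eA /andP[eE /existsP[x /andP[xe Rx]]]] /andP[_ /existsP[y /andP[ye Ry]]].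
  have xy : x != y by apply/negP => /eqP exy; rewrite exy (negbTE Ry) in Rx.
  have eq := two_elt_eq (proj1 (gG e eE)) xy xe ye.
  move/negP: Ry; apply; apply: connect_trans Rx _; apply: connect1.
  rewrite /adj inE -eq closure_inr //.
- by move=> H; have := O_wit (P := R) gG sA uC (connect0 _ u); rewrite H eqxx.
- move=> H; apply/negPn/negP => Rv.
  by have := O_wit (P := predC R) gG sA vC Rv; rewrite H eqxx.
Qed.

Lemma gE_closure G A e : is_graph G -> A \subset pts G ->
  e \in gE (graph_of (closure_in G A)) -> e \in gE G.
Proof.
by move=> gG sA; rewrite inE closure_inr // => /(subsetP sA); rewrite inE.
Qed.

Lemma acyclic_closure G A : is_graph G -> A \subset pts G -> acyclic G ->
  acyclic (graph_of (closure_in G A)).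
Proof.
move=> gG sA ac s us ss; apply/negP => cs; move/negP: (ac s us ss); apply.
by apply: sub_cycle cs => x y; rewrite /adj; apply: gE_closure.
Qed.

Lemma is_graph_closure G A : is_graph G -> A \subset pts G ->
  is_graph (graph_of (closure_in G A)).
Proof.
move=> gG sA e eC; have eE := gE_closure gG sA eC; split; first exact: (proj1 (gG e eE)).
apply/subsetP => x xe; rewrite inE closure_inl //; apply/orP; right.
by apply/existsP; exists e; rewrite xe andbT; move: eC; rewrite inE closure_inr.
Qed.


Lemma other_elt (e : {set V}) w : #|e| = 2 -> w \in e ->
  exists a, a != w /\ e = edge2 w a.
Proof.
move=> c2 we; have [x [y [xy xe ye eq]]] := two_elt c2.
move: we; rewrite eq !inE; case/orP=> /eqP ->.
  by exists y; rewrite eq_sym.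
by exists x; split=> //; rewrite edge2C.
Qed.

Lemma boundary G A w e1 e2 : is_graph G -> acyclic G -> connected_in G A ->
  inl w \notin A -> inr e1 \in A -> inr e2 \in A -> w \in e1 -> w \in e2 -> e1 = e2.
Proof.
move=> gG ac [sA cA] wA e1A e2A we1 we2.
have := subsetP sA _ e1A; rewrite inE => e1E.
have := subsetP sA _ e2A; rewrite inE => e2E.
have [a [aw e1eq]] := other_elt (proj1 (gG e1 e1E)) we1.
have [b [bw e2eq]] := other_elt (proj1 (gG e2 e2E)) we2.
apply/eqP; apply/negPn/negP => ne.
pose adj' := fun x y => adj G x y && (x != w) && (y != w).
pose R := connect adj' a.
pose P1 := fun x => (x != w) && R x.
pose P2 := fun x => (x != w) && ~~ R x.
have := cA (O_of G P1) (O_of G P2) (O_open _ gG) (O_open _ gG).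
case.
- apply: O_cover => //.
    move=> x xA; have xw : x != w by apply/negP => /eqP exw; rewrite -exw xA in wA.
    by rewrite /P1 /P2 xw /= orbN.
  move=> e eA; have := subsetP sA _ eA; rewrite inE => eE.
  have [x [y [xy xe ye _]]] := two_elt (proj1 (gG e eE)).
  case: (eqVneq x w) => [exw|xw].
    by exists y; rewrite ye /P1 /P2 -exw eq_sym xy /= orbN.
  by exists x; rewrite xe /P1 /P2 xw /= orbN.
- apply/setP => p; rewrite !inE; apply/negbTE/negP.
  case: p => [x|e]; first by rewrite /P1 /P2 /=; case: (R x); rewrite ?andbF ?andbT.
  case/andP=> /andP[eA /andP[eE /existsP[x /andP[xe /andP[xw Rx]]]]] /andP[_ /existsP[y /andP[ye /andP[yw Ry]]]].
  have xy : x != y by apply/negP => /eqP exy; rewrite exy (negbTE Ry) in Rx.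
  have eq := two_elt_eq (proj1 (gG e eE)) xy xe ye.
  move/negP: Ry; apply; apply: connect_trans Rx _; apply: connect1.
  by rewrite /adj' /adj -eq eE xw yw.
- move=> H; have : inr e1 \in A :&: O_of G P1.
    rewrite !inE e1A e1E /=; apply/existsP; exists a; rewrite /P1 /R aw connect0 andbT.
    by rewrite e1eq !inE eqxx orbT.
  by rewrite H inE.
move=> H; have : inr e2 \notin A :&: O_of G P2 by rewrite H inE.
rewrite !inE e2A e2E /= => /existsP nex.
have Rb : R b.
  apply/negPn/negP => nRb; apply: nex; exists b; rewrite /P2 bw nRb.
  by rewrite e2eq !inE eqxx orbT.
have ab : a != b by apply/negP => /eqP eab; move/negP: ne; apply; rewrite e1eq e2eq eab.
move/connectP: Rb => [p pth bl].
case: (shortenP pth) bl => p' pth' up' _ bl.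
have avoid : all (fun y => y != w) p'.
  have gen : forall x q, path adj' x q -> all (fun y => y != w) q.
    move=> x q; elim: q x => //= y q IH x /andP[/andP[/andP[_ _] yw] pq].
    by rewrite yw (IH y).
  exact: gen pth'.
have := ac (w :: a :: p').
have us : uniq (w :: a :: p').
  rewrite cons_uniq up' andbT in_cons negb_or eq_sym aw /=.
  by apply/negP => wp; move/allP: avoid => /(_ w wp); rewrite eqxx.
have ss : (3 <= size (w :: a :: p'))%N.
  by case: p' {pth' up' avoid us} bl => [/= ba|]; [rewrite ba eqxx in ab|].
move=> /(_ us ss); apply/negP/negPn.
rewrite /cycle /= rcons_path; apply/andP; split; first by rewrite /adj -e1eq.
apply/andP; split.
  by apply: sub_path pth' => x y /andP[/andP[]].
by rewrite -bl /adj edge2C -e2eq.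
Qed.

Lemma valence1 G A w e : is_graph G -> acyclic G -> connected_in G A ->
  inl w \notin A -> inr e \in A -> w \in e ->
  valence (graph_of (closure_in G A)) w = 1%N.
Proof.
move=> gG ac cA wA eA we; have sA := proj1 cA.
rewrite /valence (_ : edges_at _ w = [set e]) ?cards1 //.
apply/setP => e'; rewrite /edges_at !inE closure_inr //.
apply/andP/eqP => [[e'A we']|->] //.
exact: (boundary gG ac cA wA).
Qed.

Lemma edges_open G A v : is_graph G -> open_in G A -> inl v \in A ->
  edges_at (graph_of (closure_in G A)) v = edges_at G v.
Proof.
move=> gG oA vA; have sA := proj1 oA.
apply/setP => e; rewrite /edges_at !inE closure_inr //.
apply/andP/andP => [[eA ve]|[eE ve]]; split=> //.
  by have := subsetP sA _ eA; rewrite inE.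
exact: (open_star oA vA).
Qed.

Lemma add_conn G A x : connected_in G A -> x \in pts G ->
  (forall O1 O2, open_in G O1 -> open_in G O2 -> x \in O1 ->
     A \subset O1 :|: O2 -> A :&: O1 = finset.set0 -> x \in O2) ->
  connected_in G (x |: A).
Proof.
move=> [sA cA] xP C; split.
  by rewrite finset.subUset finset.sub1set xP sA.
move=> O1 O2 o1 o2 sD dD.
have sA' : A \subset O1 :|: O2 := fintype.subset_trans (finset.subsetUr _ _) sD.
have dA : A :&: O1 :&: O2 = finset.set0.
  apply/eqP; rewrite -finset.subset0 -dD.
  by apply: finset.setSI; apply: finset.setSI; apply: finset.subsetUr.
case: (cA O1 O2 o1 o2 sA' dA) => H; [left|right]; apply/setP => y;
  rewrite !inE; apply/negbTE/negP => /andP[/orP[/eqP->|yA] yO].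
- have : x \in (x |: A) :&: O1 :&: O2.
    by rewrite !inE eqxx yO (C O1 O2).
  by rewrite dD inE.
- have : y \in A :&: O1 by rewrite inE yA yO.
  by rewrite H inE.
- have : x \in (x |: A) :&: O1 :&: O2.
    by rewrite !inE eqxx yO (C O2 O1) // setUC.
  by rewrite dD inE.
- have : y \in A :&: O2 by rewrite inE yA yO.
  by rewrite H inE.
Qed.


Lemma int_in G A v : is_graph G -> acyclic G -> connected_in G A -> open_in G A ->
  v \in internal (graph_of (closure_in G A)) -> inl v \in A /\ v \in internal G.
Proof.
move=> gG ac cA oA; have sA := proj1 cA; rewrite inE => /andP[vV vn1].
have vA : inl v \in A.
  move: vV; rewrite inE closure_inl // => /orP[//|/existsP[e /andP[eA ve]]].
  apply/negPn/negP => vA; move: vn1.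
  by rewrite (valence1 gG ac cA vA eA ve).
split=> //; rewrite inE; apply/andP; split.
  by have := subsetP sA _ vA; rewrite inE.
by move: vn1; rewrite /valence (edges_open gG oA vA).
Qed.

Lemma tree_closure G A : is_tree G -> connected_in G A -> A != finset.set0 ->
  is_tree (graph_of (closure_in G A)).
Proof.
move=> [gG [_ ac]] cA A0; have sA := proj1 cA; split.
  exact: is_graph_closure.
by split; [apply: conn_graph | apply: acyclic_closure].
Qed.

End Aux.

Theorem lemma2p25 (VY VZ : finType)
    (GY : graph VY) (SY : VY -> topologicalType) (iY : forall v, {set VY} -> SY v)
    (GZ : graph VZ) (SZ : VZ -> topologicalType) (iZ : forall w, {set VZ} -> SZ w)
    (F : VY -> VZ) (f : forall v, SY v -> SZ (F v))
    (T'' : {set pt VZ}) (T' : {set pt VY}) :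
  tree_of_spheres GY SY iY ->
  tree_of_spheres GZ SZ iZ ->
  is_cover GY SY iY GZ SZ iZ F f ->
  T'' != finset.set0 -> open_in GZ T'' -> connected_in GZ T'' ->
  component_of GY (preim_pt GY F T'') T' ->
  let GY' := graph_of (closure_in GY T') in
  let GZ' := graph_of (closure_in GZ T'') in
  [/\ marked_tree_of_spheres GY' SY iY,
      marked_tree_of_spheres GZ' SZ iZ &
      is_cover GY' SY iY GZ' SZ iZ F f].
Proof.
move=> [[tY sY] _] [[tZ sZ] _] [[cV cE] cL cI cD cF] T0 oT cT [sTP T'0 cT' maxT].
move=> GY' GZ'.
have [gY [_ acY]] := tY; have [gZ [_ acZ]] := tZ.
have sT : T'' \subset pts GZ := proj1 cT.
have sT' : T' \subset pts GY := proj1 cT'.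
have mapTl v : inl v \in T' -> inl (F v) \in T''.
  by move/(subsetP sTP); rewrite inE => /andP[].
have mapTr e : inr e \in T' -> inr (F @: e) \in T''.
  by move/(subsetP sTP); rewrite inE => /andP[].
have oT' : open_in GY T'.
  apply: open_intro gY sT' _ => v e vT eE ve.
  have eP : inr e \in preim_pt GY F T''.
    rewrite inE /= inE eE /=.
    exact: (open_star oT (mapTl v vT) (cE e eE) (imset_f F ve)).
  have := maxT (inr e |: T') (finset.subsetUr _ _).
  rewrite finset.subUset finset.sub1set eP sTP => /(_ isT).
  have : connected_in GY (inr e |: T').
    apply: add_conn => //; first by rewrite inE.
    move=> O1 O2 o1 o2 eO1 sO H.
    have : inl v \in O1 :|: O2 by apply: (subsetP sO).
    rewrite inE; case/orP => vO.
      have : inl v \in T' :&: O1 by rewrite inE vT vO.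
      by rewrite H inE.
    exact: (open_star o2 vO eE ve).
  move=> c /(_ c) <-; exact: finset.setU11.
have bnd v e : inl v \notin T' -> inr e \in T' -> v \in e -> inl (F v) \notin T''.
  move=> vT eT ve; apply/negP => FvT.
  have eE : e \in gE GY by have := subsetP sT' _ eT; rewrite inE.
  have vP : inl v \in pts GY.
    by rewrite inE; have [_ /subsetP] := gY e eE; apply.
  have := maxT (inl v |: T') (finset.subsetUr _ _).
  rewrite finset.subUset finset.sub1set sTP andbT inE vP /= => /(_ FvT).
  have : connected_in GY (inl v |: T').
    apply: add_conn => // O1 O2 o1 o2 vO sO H.
    have : inr e \in T' :&: O1 by rewrite inE eT (open_star o1 vO eE ve).
    by rewrite H inE.
  move=> c /(_ c) eq; move/negP: vT; apply; rewrite -eq; exact: finset.setU11.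
have FvV v : v \in gV GY' -> F v \in gV GZ'.
  rewrite /GY' /GZ' !inE !closure_inl // => /orP[vT|/existsP[e /andP[eT ve]]].
    by rewrite mapTl.
  by apply/orP; right; apply/existsP; exists (F @: e); rewrite mapTr // imset_f.
split.
- split; first exact: tree_closure.
  move=> v vI; have [vT vIY] := int_in gY acY cT' oT' vI.
  have [s inj] := sY v vIY; split=> //.
  by rewrite /GY' (edges_open gY oT' vT).
- split; first exact: tree_closure.
  move=> v vI; have [vT vIY] := int_in gZ acZ cT oT vI.
  have [s inj] := sZ v vIY; split=> //.
  by rewrite /GZ' (edges_open gZ oT vT).
split.
- split; first exact: FvV.
  by move=> e; rewrite /GY' /GZ' !inE !closure_inr //; apply: mapTr.
- move=> v; rewrite inE => /andP[vV v1].
  rewrite [F v \in leaves _]inE; apply/andP; split; first by have := FvV v vV; rewrite inE.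
  case: (boolP (inl v \in T')) => vT.
    have vY : v \in leaves GY.
      rewrite inE; apply/andP; split; first by have := subsetP sT' _ vT; rewrite inE.
      by move: v1; rewrite /valence /GY' (edges_open gY oT' vT).
    have := cL v vY; rewrite inE => /andP[_ Fv1].
    by rewrite /valence /GZ' (edges_open gZ oT (mapTl v vT)).
  move: vV; rewrite inE closure_inl // (negbTE vT) /= => /existsP[e /andP[eT ve]].
  by rewrite /GZ' (valence1 gZ acZ cT (bnd v e vT eT ve) (mapTr e eT) (imset_f F ve)).
- move=> v vI; have [vT vIY] := int_in gY acY cT' oT' vI.
  have := cI v vIY; rewrite !inE => /andP[_ n1].
  move: vI; rewrite inE => /andP[vV _].
  apply/andP; split; first by have := FvV v vV; rewrite inE.
  by rewrite /valence /GZ' (edges_open gZ oT (mapTl v vT)).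
- move=> v vI; have [vT vIY] := int_in gY acY cT' oT' vI.
  have [bc cov ed] := cD v vIY; split=> //.
    by rewrite /marks /GY' /GZ' (edges_open gY oT' vT) (edges_open gZ oT (mapTl v vT)).
  by move=> e; rewrite /GY' (edges_open gY oT' vT); apply: ed.
- move=> v1 v2 I1 I2 eE.
  have [_ vI1] := int_in gY acY cT' oT' I1.
  have [_ vI2] := int_in gY acY cT' oT' I2.
  by apply: cF => //; apply: (gE_closure gY sT' eE).
Qed.
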